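(* For every fixed $p\in(0,1]$ and every integer $n\ge1$, $\gamma_n^*(p)\ge\gamma_{n+1}^*(p)$.
   Context: SP-UA model: $n$ candidates with distinct overall ranks $1,\dots,n$ ($1$ best) arrive in uniformly random order; the decision maker sees only each candidate's rank among those arrived so far and irrevocably decides (possibly randomly) to make an offer or pass; an offered candidate accepts independently with probability $p$ and then the process stops. A policy collects a candidate of rank $i$ if it makes her an offer and she accepts. $\gamma_n^*(p)=\sup_{\mathcal P}\min_{k\in[n]}\Pr(\mathcal P\text{ collects a candidate with rank}\le k)/(1-(1-p)^k)$, the supremum over policies for $n$ candidates. *)

(* Defs.v *)
From HB Require Import structures.
From mathcomp Require Import all_boot all_order all_algebra all_fingroup.
From mathcomp Require Import all_classical all_reals.
Set Implicit Arguments. Unset Strict Implicit. Unset Printing Implicit Defensive.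
Import Order.TTheory GRing.Theory Num.Theory.
Local Open Scope ring_scope.
Local Open Scope classical_set_scope.

(* Arrival order: a permutation s of 'I_n; s i is the overall rank (0 = best)
   of the candidate arriving at time i (times 0..n-1).  Uniform random order
   = uniform average over {perm 'I_n}. *)

Definition relrank (n : nat) (s : {perm 'I_n}) (i : 'I_n) : nat :=
  #|[set j : 'I_n | (j <= i)%N && (s j <= s i)%N]|.

Definition history (n : nat) (s : {perm 'I_n}) (i : 'I_n) : seq nat :=
  [seq relrank s j | j : 'I_n <- enum 'I_n & (j <= i)%N].

(* A (randomized) policy: at time t, having observed history h (and not having
   stopped yet), make an offer with probability q t h. *)
Definition policy (R : realType) := nat -> seq nat -> R.

Definition valid_policy (R : realType) (q : policy R) : Prop :=
  forall t h, 0 <= q t h <= 1.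

(* Probability (for the fixed arrival order s) that the policy reaches time i,
   makes an offer there and the offer is accepted: all earlier offers (if any)
   were rejected, acceptance being independent with probability p. *)
Definition collect_at (R : realType) (n : nat) (p : R) (q : policy R)
    (s : {perm 'I_n}) (i : 'I_n) : R :=
  p * q i (history s i) *
  \prod_(j : 'I_n | (j < i)%N) (1 - p * q j (history s j)).

(* Pr(policy collects a candidate with overall rank <= k) (ranks 1-based). *)
Definition collect_le (R : realType) (n : nat) (p : R) (q : policy R)
    (k : nat) : R :=
  (n`!%:R)^-1 *
  \sum_(s : {perm 'I_n}) \sum_(i : 'I_n | (s i < k)%N) collect_at p q s i.

Definition ratio_value (R : realType) (n : nat) (p : R) (q : policy R) : R :=
  inf [set r : R | exists2 k : nat, (0 < k <= n)%N &
                     r = collect_le n p q k / (1 - (1 - p) ^+ k)].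

Definition gamma_star (R : realType) (n : nat) (p : R) : R :=
  sup [set v : R | exists q : policy R, valid_policy q /\ v = ratio_value n p q].

(* Main.v *)
Require Import Defs.
From HB Require Import structures.
From mathcomp Require Import all_boot all_order all_algebra all_fingroup.
From mathcomp Require Import all_classical all_reals.
From mathcomp Require Import zify.
Import Order.TTheory GRing.Theory Num.Theory.
Set Implicit Arguments. Unset Strict Implicit. Unset Printing Implicit Defensive.

Definition hseq N (s : {perm 'I_N.+1}) (t : nat) : seq nat :=
  mkseq (fun k => relrank s (inord k)) t.+1.

Lemma history_mk N (s : {perm 'I_N.+1}) (i : 'I_N.+1) : history s i = hseq s i.
Proof.
rewrite /history /hseq /mkseq.
have -> : [seq relrank s j | j : 'I_N.+1 <- enum 'I_N.+1 & (j <= i)%N] =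
   map (fun k => relrank s (inord k)) (map (@nat_of_ord _) [seq j : 'I_N.+1 <- enum 'I_N.+1 | (j <= i)%N]).
  rewrite -map_comp; apply: eq_map => j /=; by rewrite inord_val.
congr map.
rewrite -(filter_map (@nat_of_ord _) (fun k => (k <= i)%N)) val_enum_ord.

by rewrite (filter_iota_leq 0 (ltn_ord i)).
Qed.

Lemma relrankE n (s : {perm 'I_n}) i :
  relrank s i = #|[set j : 'I_n | (j <= i)%N && (s j <= s i)%N]%SET|.
Proof. apply: eq_card => x. rewrite inE. by rewrite /in_mem /mem /= /in_set asboolb. Qed.

Lemma relrank_lift m (s : {perm 'I_m}) (pos : 'I_m.+1) (j : 'I_m) :
  relrank (lift_perm pos ord_max s) (lift pos j) = relrank s j.
Proof.
rewrite !relrankE.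
set B := [set j' : 'I_m | (j' <= j)%N && (s j' <= s j)%N].
rewrite -(card_imset B (@lift_inj _ pos)).
apply: eq_card => i; rewrite inE.
case: (unliftP pos i) => [j'|] ->.
  rewrite mem_imset ?inE; last exact: lift_inj.
  by rewrite !lift_perm_lift !lift_max leq_bump2.
rewrite lift_perm_id lift_perm_lift lift_max /= [(m <= _)%N]leqNgt ltn_ord andbF.
apply/esym/negP => /imsetP [x _] /eqP; by rewrite (negbTE (neq_lift _ _)).
Qed.

Lemma relrank_pos m (s : {perm 'I_m}) (pos : 'I_m.+1) :
  relrank (lift_perm pos ord_max s) pos = pos.+1.
Proof.
rewrite relrankE lift_perm_id.
have -> : [set j : 'I_m.+1 | (j <= pos)%N && (lift_perm pos ord_max s j <= @ord_max m)%N]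
   = [set j : 'I_m.+1 | (j < pos.+1)%N].
  by apply/setP => j; rewrite !inE /= leq_ord andbT ltnS.
rewrite -sum1_card.
rewrite (eq_bigl (fun j : 'I_m.+1 => (j < pos.+1)%N)); last by move=> j; rewrite inE.
by rewrite -(big_ord_widen _ (fun _ => 1%N) (ltn_ord pos)) sum1_card card_ord.
Qed.

Definition Fh (pos t : nat) (h : seq nat) : seq nat :=
  mkseq (fun i => if (i < pos)%N then nth 0%N h i
                  else if i == pos then pos.+1 else nth 0%N h i.-1) (bump pos t).+1.

Lemma inord_lift m (pos : 'I_m.+2) (k : nat) : (k <= m)%N ->
  (inord (bump pos k) : 'I_m.+2) = lift pos (inord k : 'I_m.+1).
Proof.
move=> km; apply: val_inj => /=; rewrite inordK ?inordK //.
rewrite /bump; case: (pos <= k)%N; rewrite /= ?add1n ?add0n ltnS //.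
exact: (leq_trans km).
Qed.

Lemma hist_ins m (s : {perm 'I_m.+1}) (pos : 'I_m.+2) (j : 'I_m.+1) :
  history (lift_perm pos ord_max s) (lift pos j) = Fh pos j (history s j).
Proof.
rewrite !history_mk /hseq /Fh /= /mkseq; apply/eq_in_map => i; rewrite mem_iota add0n => hi.
have hj : (j <= m)%N by rewrite -ltnS.
have hp : (pos <= m.+1)%N by rewrite -ltnS.
move: hi; rewrite /bump => hi.
case: ltnP => hip.
  have iles : (i < j.+1)%N by move: hi; case: (leqP pos j) => /= ? ?; lia.
  rewrite (nth_map 0%N) ?size_iota // nth_iota // add0n.
  rewrite {1}(_ : i = bump pos i); last by rewrite /bump leqNgt hip.
  rewrite inord_lift ?relrank_lift //; lia.
case: eqP => [->|hne].
  by rewrite inord_val relrank_pos.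
have hpi : (pos < i)%N by lia.
have i1 : (i.-1 < j.+1)%N by move: hi; case: (leqP pos j) => /= ? ?; lia.
rewrite (nth_map 0%N) ?size_iota // nth_iota // add0n.
rewrite {1}(_ : i = bump pos i.-1); last by rewrite /bump; case: leqP => ?; lia.
rewrite inord_lift ?relrank_lift //; lia.
Qed.

Local Open Scope ring_scope.
From mathcomp Require Import ring lra.

Definition Qp (R : realType) (q : policy R) (pos : nat) : policy R :=
  fun t h => q (bump pos t) (Fh pos t h).

Lemma fac01 (R : realType) (p x : R) : 0 <= p <= 1 -> 0 <= x <= 1 ->
  0 <= 1 - p * x <= 1.
Proof. move=> /andP[p0 p1] /andP[x0 x1]; apply/andP; split; nra. Qed.

Lemma ltn_bump2 i a b : (bump i a < bump i b)%N = (a < b)%N.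
Proof. by rewrite !ltnNge leq_bump2. Qed.

Lemma Qp_valid (R : realType) (q : policy R) pos :
  valid_policy q -> valid_policy (Qp q pos).
Proof. by move=> hq t h; apply: hq. Qed.

Lemma collect_ins (R : realType) (p : R) (q : policy R) m
  (s : {perm 'I_m.+1}) (pos : 'I_m.+2) (j : 'I_m.+1) :
  0 <= p <= 1 -> valid_policy q ->
  collect_at p q (lift_perm pos ord_max s) (lift pos j) <= collect_at p (Qp q pos) s j.
Proof.
move=> hp hq; rewrite /collect_at hist_ins.
have h0 : 0 <= p * Qp q pos j (history s j).
  case/andP: hp => ? _; case/andP: (hq (bump pos j) (Fh pos j (history s j))) => ? _; apply: mulr_ge0 => //.
apply: ler_wpM2l => //.
rewrite big_mkcond [X in _ <= X]big_mkcond.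
rewrite (bigD1_ord pos) //=.
rewrite [X in _ * X](_ : _ = \prod_(i < m.+1) (if (i < j)%N then 1 - p * Qp q pos i (history s i) else 1)); last first.
  apply: eq_bigr => k _. rewrite ltn_bump2; case: ifP => // _.
  by rewrite hist_ins.
apply: ler_piMl.
  apply: prodr_ge0 => k _; case: ifP => // _.
  by case/andP: (fac01 hp (Qp_valid pos hq k (history s k))).
case: ifP => // _; by case/andP: (fac01 hp (hq pos (history (lift_perm pos ord_max s) pos))).
Qed.

Lemma split_sum (R : realType) m (F : {perm 'I_m.+2} -> R) :
  \sum_(s : {perm 'I_m.+2}) F s =
  \sum_(pos : 'I_m.+2) \sum_(t : {perm 'I_m.+1}) F (lift_perm pos ord_max t).
Proof.
rewrite (partition_big (fun s : {perm 'I_m.+2} => (s^-1)%g ord_max) predT) //=.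
apply: eq_bigr => i0 _.
rewrite (eq_bigl (fun s : {perm 'I_m.+2} => s i0 == ord_max)); last first.
  move=> s; apply/eqP/eqP => [<-|<-]; by rewrite ?permKV ?permK.
rewrite (reindex (lift_perm i0 ord_max)); last first.
  pose ulsf i (s : 'S_m.+2) k := odflt k (unlift (s i) (s (lift i k))).
  have ulsfK i (s : 'S_m.+2) k: lift (s i) (ulsf i s k) = s (lift i k).
    rewrite /ulsf; have:= neq_lift i k.
    by rewrite -(can_eq (permK s)) => /unlift_some[] ? ? ->.
  have inj_ulsf: injective (ulsf i0 _).
    move=> s; apply: can_inj (ulsf (s i0) s^-1%g) _ => k'.
    by rewrite {1}/ulsf ulsfK !permK liftK.
  exists (fun s => perm (inj_ulsf s)) => [s _ | s].
    by apply/permP=> k'; rewrite permE /ulsf lift_perm_lift lift_perm_id liftK.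
  move/(s _ =P _) => si0; apply/permP=> k.
  case: (unliftP i0 k) => [k'|] ->; rewrite ?lift_perm_id //.
  by rewrite lift_perm_lift -si0 permE ulsfK.
by apply: eq_bigl => s; rewrite lift_perm_id eqxx.
Qed.

Lemma step_sum (R : realType) (p : R) (q : policy R) m (k : nat)
  (s : {perm 'I_m.+1}) (pos : 'I_m.+2) :
  0 <= p <= 1 -> valid_policy q -> (k <= m.+1)%N ->
  \sum_(i : 'I_m.+2 | (lift_perm pos ord_max s i < k)%N)
      collect_at p q (lift_perm pos ord_max s) i <=
  \sum_(j : 'I_m.+1 | (s j < k)%N) collect_at p (Qp q pos) s j.
Proof.
move=> hp hq hk.
rewrite big_mkcond (bigD1_ord pos) //= lift_perm_id /= ltnNge hk /= add0r.
rewrite [X in _ <= X]big_mkcond /=.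
apply: ler_sum => j _; rewrite lift_perm_lift lift_max.
case: ifP => // _; exact: collect_ins.
Qed.

Lemma collect_split (R : realType) (p : R) (q : policy R) m (k : nat) :
  0 <= p <= 1 -> valid_policy q -> (k <= m.+1)%N ->
  collect_le m.+2 p q k <=
  (m.+2)%:R^-1 * \sum_(pos : 'I_m.+2) collect_le m.+1 p (Qp q pos) k.
Proof.
move=> hp hq hk; rewrite /collect_le split_sum.
apply: (@le_trans _ _ ((m.+2)`!%:R^-1 * \sum_(pos : 'I_m.+2) \sum_(t : {perm 'I_m.+1})
    \sum_(j : 'I_m.+1 | (t j < k)%N) collect_at p (Qp q pos) t j)).
  apply: ler_wpM2l; first by rewrite invr_ge0 ler0n.
  apply: ler_sum => pos _; apply: ler_sum => t _; exact: step_sum.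
rewrite big_distrr [X in _ <= X]big_distrr /=; apply: ler_sum => pos _.
by rewrite mulrA factS natrM invfM.
Qed.

Lemma hist_take N (s : {perm 'I_N.+1}) (i j : 'I_N.+1) : (i <= j)%N ->
  history s i = take i.+1 (history s j).
Proof.
move=> hij; rewrite !history_mk /hseq /mkseq -map_take take_iota.
by rewrite (minn_idPl _) // ltnS.
Qed.

Definition Sv (R : realType) (p : R) K (Q : 'I_K -> policy R) (a : 'I_K) (t : nat) (h : seq nat) : R :=
  \prod_(0 <= i < t) (1 - p * Q a i (take i.+1 h)).

Definition Dv (R : realType) (p : R) K (Q : 'I_K -> policy R) t h : R :=
  K%:R^-1 * \sum_(a : 'I_K) Sv p Q a t h.

Definition Nv (R : realType) (p : R) K (Q : 'I_K -> policy R) t h : R :=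
  K%:R^-1 * \sum_(a : 'I_K) Sv p Q a t h * Q a t h.

Definition mix (R : realType) (p : R) K (Q : 'I_K -> policy R) : policy R :=
  fun t h => if Dv p Q t h == 0 then 0 else Nv p Q t h / Dv p Q t h.

Section Mix.
Context (R : realType) (p : R) (K : nat) (Q : 'I_K -> policy R).
Hypothesis hp : 0 <= p <= 1.
Hypothesis hQ : forall a, valid_policy (Q a).
Hypothesis hK : (0 < K)%N.

Lemma Sv_ge0 a t h : 0 <= Sv p Q a t h.
Proof. by apply: prodr_ge0 => i _; case/andP: (fac01 hp (hQ a i (take i.+1 h))). Qed.

Lemma Sv_take a t h j : (t <= j)%N -> Sv p Q a t (take j h) = Sv p Q a t h.
Proof.
move=> tj; apply: eq_big_nat => i /andP[_ it].
by rewrite take_takel // (leq_trans it tj).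
Qed.

Lemma Dv_take t h j : (t <= j)%N -> Dv p Q t (take j h) = Dv p Q t h.
Proof. by move=> tj; rewrite /Dv; congr (_ * _); apply: eq_bigr => a _; rewrite Sv_take. Qed.

Lemma Nv_bounds t h : 0 <= Nv p Q t h <= Dv p Q t h.
Proof.
have k0 : 0 <= K%:R^-1 :> R by rewrite invr_ge0 ler0n.
apply/andP; split.
  apply: mulr_ge0 => //; apply: sumr_ge0 => a _; apply: mulr_ge0; first exact: Sv_ge0.
  by case/andP: (hQ a t h).
apply: ler_wpM2l => //; apply: ler_sum => a _.
apply: ler_piMr; first exact: Sv_ge0.
by case/andP: (hQ a t h).
Qed.

Lemma mix_valid : valid_policy (mix p Q).
Proof.
move=> t h; rewrite /mix; case: eqP => [_|hD]; first by rewrite lexx ler01.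
case/andP: (Nv_bounds t h) => n0 nD.
have D0 : 0 < Dv p Q t h by rewrite lt_neqAle eq_sym; apply/andP; split; [apply/eqP|exact: le_trans nD].
apply/andP; split; first by apply: divr_ge0 => //; exact: ltW.
by rewrite ler_pdivrMr // mul1r.
Qed.

Lemma Dv0 h : Dv p Q 0 h = 1.
Proof.
rewrite /Dv /Sv (eq_bigr (fun _ => 1)); last by move=> a _; rewrite big_geq.
by rewrite sumr_const card_ord -[X in _ * X]mulr_natl mulr1 mulVf // pnatr_eq0 -lt0n.
Qed.

Lemma mix_prod h t :
  \prod_(0 <= i < t) (1 - p * mix p Q i (take i.+1 h)) = Dv p Q t h.
Proof.
elim: t => [|t IH]; first by rewrite big_geq // Dv0.
rewrite big_nat_recr //= IH.
have eD : Dv p Q t.+1 h = Dv p Q t h - p * Nv p Q t (take t.+1 h).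
  rewrite /Dv /Nv mulrCA -mulrBr; congr (_ * _).
  rewrite big_distrr -sumrB; apply: eq_bigr => a _.
  rewrite (Sv_take a h (leqnSn t)) /Sv big_nat_recr //=.
  rewrite mulrBr mulr1 mulrCA. reflexivity.
rewrite eD /mix (Dv_take _ (leqnSn t)).
case: eqP => [D0|Dn0].
  have : Nv p Q t (take t.+1 h) = 0.
    case/andP: (Nv_bounds t (take t.+1 h)) => a b; rewrite (Dv_take _ (leqnSn t)) D0 in b.
    by apply/eqP; rewrite eq_le a b.
  by move=> ->; rewrite D0 !mulr0 !subr0 mul0r.
by field; apply/eqP.
Qed.

End Mix.

Lemma prod_conv (R : realType) (p : R) (q : policy R) N (s : {perm 'I_N.+1}) (j : 'I_N.+1) :
  \prod_(i : 'I_N.+1 | (i < j)%N) (1 - p * q i (history s i)) =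
  \prod_(0 <= i < j) (1 - p * q i (take i.+1 (history s j))).
Proof.
rewrite big_mkord (big_ord_widen N.+1 (fun i => 1 - p * q i (take i.+1 (history s j))) (ltnW (ltn_ord j))).
by apply: eq_bigr => i hi; rewrite -hist_take // ltnW.
Qed.

Lemma collect_mix (R : realType) (p : R) K (Q : 'I_K -> policy R) N
  (s : {perm 'I_N.+1}) (j : 'I_N.+1) :
  0 <= p <= 1 -> (forall a, valid_policy (Q a)) -> (0 < K)%N ->
  collect_at p (mix p Q) s j = K%:R^-1 * \sum_(a : 'I_K) collect_at p (Q a) s j.
Proof.
move=> hp hQ hK; rewrite /collect_at prod_conv mix_prod //.
have hh : take j.+1 (history s j) = history s j.
  by rewrite history_mk /hseq /mkseq take_oversize // size_map size_iota.
have e : p * mix p Q j (history s j) * Dv p Q j (history s j) = p * Nv p Q j (history s j).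
  rewrite /mix; case: eqP => [D0|Dn0].
    have : Nv p Q j (history s j) = 0.
      case/andP: (Nv_bounds hp hQ j (history s j)) => a b; rewrite D0 in b.
      by apply/eqP; rewrite eq_le a b.
    by move=> ->; rewrite D0 !mulr0.
  by rewrite -!mulrA mulVf ?mulr1 //; apply/eqP.
rewrite e /Nv mulrCA; congr (_ * _); rewrite big_distrr; apply: eq_bigr => a _.
rewrite prod_conv /Sv /=; ring.
Qed.

Lemma collect_le_mix (R : realType) (p : R) K (Q : 'I_K -> policy R) N (k : nat) :
  0 <= p <= 1 -> (forall a, valid_policy (Q a)) -> (0 < K)%N ->
  collect_le N.+1 p (mix p Q) k = K%:R^-1 * \sum_(a : 'I_K) collect_le N.+1 p (Q a) k.
Proof.
move=> hp hQ hK; rewrite /collect_le.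
under eq_bigr do under eq_bigr do rewrite collect_mix //.
under eq_bigr do rewrite -big_distrr /=.
rewrite -big_distrr /= mulrCA -[in RHS]big_distrr /=; congr (_ * (_ * _)).
under eq_bigr do rewrite exchange_big /=.
by rewrite exchange_big.
Qed.

Lemma den_pos (R : realType) (p : R) k : 0 < p -> p <= 1 -> (0 < k)%N ->
  0 < 1 - (1 - p) ^+ k.
Proof.
move=> p0 p1 k0; rewrite subr_gt0 expr_lt1 //; lra.
Qed.

Lemma collect_at_ge0 (R : realType) (p : R) (q : policy R) N s (i : 'I_N) :
  0 <= p <= 1 -> valid_policy q -> 0 <= collect_at p q s i.
Proof.
move=> hp hq; rewrite /collect_at; apply: mulr_ge0.
  by case/andP: hp => ? _; case/andP: (hq i (history s i)) => ? _; apply: mulr_ge0.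
by apply: prodr_ge0 => j _; case/andP: (fac01 hp (hq j (history s j))).
Qed.

Lemma collect_at_le1 (R : realType) (p : R) (q : policy R) N s (i : 'I_N) :
  0 <= p <= 1 -> valid_policy q -> collect_at p q s i <= 1.
Proof.
move=> hp hq; rewrite /collect_at.
have h1 : 0 <= p * q i (history s i) <= 1.
  case/andP: hp => ? ?; case/andP: (hq i (history s i)) => ? ?; apply/andP; split; nra.
have h2 : 0 <= \prod_(j : 'I_N | (j < i)%N) (1 - p * q j (history s j)) <= 1.
  apply/andP; split.
    by apply: prodr_ge0 => j _; case/andP: (fac01 hp (hq j (history s j))).
  by apply: prodr_ile1 => j _; exact: (fac01 hp (hq j (history s j))).
case/andP: h1 => ? ?; case/andP: h2 => ? ?; nra.
Qed.

Lemma collect_le_ge0 (R : realType) (p : R) (q : policy R) N k :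
  0 <= p <= 1 -> valid_policy q -> 0 <= collect_le N p q k.
Proof.
move=> hp hq; rewrite /collect_le; apply: mulr_ge0; first by rewrite invr_ge0 ler0n.
by apply: sumr_ge0 => s _; apply: sumr_ge0 => i _; exact: collect_at_ge0.
Qed.

Lemma collect_le_leN (R : realType) (p : R) (q : policy R) N k :
  0 <= p <= 1 -> valid_policy q -> collect_le N p q k <= N%:R.
Proof.
move=> hp hq; rewrite /collect_le.
apply: (@le_trans _ _ (N`!%:R^-1 * \sum_(s : {perm 'I_N}) N%:R)).
  apply: ler_wpM2l; first by rewrite invr_ge0 ler0n.
  apply: ler_sum => s _; rewrite big_mkcond /=.
  apply: (@le_trans _ _ (\sum_(i : 'I_N) (1 : R))); last by rewrite sumr_const card_ord.
  apply: ler_sum => i _; case: ifP => _ //; exact: collect_at_le1.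
rewrite sumr_const card_Sn -(mulr_natl (N%:R : R) N`!) mulrA mulVf ?mul1r //.
by rewrite pnatr_eq0 -lt0n fact_gt0.
Qed.

Lemma ratio_le_elem (R : realType) (p : R) (q : policy R) N k :
  0 < p -> p <= 1 -> valid_policy q -> (0 < k <= N)%N ->
  ratio_value N p q <= collect_le N p q k / (1 - (1 - p) ^+ k).
Proof.
move=> p0 p1 hq hk; rewrite /ratio_value; apply: ge_inf; last by exists k.
exists 0 => r [k' /andP[k0 _] ->]; apply: divr_ge0.
  by apply: collect_le_ge0 => //; rewrite ltW.
by apply: ltW; apply: den_pos.
Qed.

Lemma ratio_ge (R : realType) (p : R) (q : policy R) N x : (0 < N)%N ->
  (forall k, (0 < k <= N)%N -> x <= collect_le N p q k / (1 - (1 - p) ^+ k)) ->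
  x <= ratio_value N p q.
Proof.
move=> N0 h; rewrite /ratio_value; apply: lb_le_inf.
  by exists (collect_le N p q 1 / (1 - (1 - p) ^+ 1)); exists 1%N.
by move=> r [k hk ->]; apply: h.
Qed.

Lemma ratio_ub (R : realType) (p : R) (q : policy R) N :
  0 < p -> p <= 1 -> valid_policy q -> (0 < N)%N ->
  ratio_value N p q <= N%:R / p.
Proof.
move=> p0 p1 hq N0; apply: le_trans (ratio_le_elem p0 p1 hq (_ : (0 < 1 <= N)%N)) _.
  by rewrite N0.
rewrite expr1 (_ : 1 - (1 - p) = p); last by ring.
apply: ler_wpM2r; first by rewrite invr_ge0 ltW.
by apply: collect_le_leN => //; rewrite ltW.
Qed.

Theorem lemma1 (R : realType) (p : R) (n : nat) :
  0 < p -> p <= 1 -> (1 <= n)%N ->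
  gamma_star (n.+1) p <= gamma_star n p.
Proof.
move=> p0 p1; case: n => [//|m] _.
have hp : 0 <= p <= 1 by rewrite ltW.
have hub : has_ubound [set v : R | exists q : policy R, valid_policy q /\ v = ratio_value m.+1 p q]%classic.
  exists (m.+1%:R / p) => v [q [hq ->]]; exact: ratio_ub.
rewrite /gamma_star; apply: ge_sup.
  exists (ratio_value m.+2 p (fun _ _ => 0)); exists (fun _ _ => 0); split => //.
  by move=> t h; rewrite lexx ler01.
move=> v [q [hq ->]].
pose Q := fun pos : 'I_m.+2 => Qp q pos.
have hQ : forall a, valid_policy (Q a) by move=> a; exact: Qp_valid.
apply: (@le_trans _ _ (ratio_value m.+1 p (mix p Q))); last first.
  apply: ub_le_sup => //; exists (mix p Q); split => //; exact: mix_valid.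
apply: ratio_ge => // k /andP[k0 km].
apply: le_trans (ratio_le_elem p0 p1 hq (_ : (0 < k <= m.+2)%N)) _.
  by rewrite k0 (leq_trans km).
apply: ler_wpM2r; first by rewrite invr_ge0 ltW // den_pos.
rewrite collect_le_mix //; exact: collect_split.
Qed.
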